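(* If $R$ is a weak symmetric ring, then $R$ is NJ-symmetric.
   Context: Rings are associative with identity. $N(R)$ is the set of nilpotent elements, $J(R)$ the Jacobson radical. $R$ is weak symmetric if for all $a,b,c\in R$, $abc\in N(R)$ implies $acb\in N(R)$. $R$ is NJ-symmetric if for all $a,b,c\in R$, $abc\in N(R)$ implies $bac\in J(R)$. *)

(* Defs.v *)
From HB Require Import structures.
From mathcomp Require Import all_boot all_algebra.
Set Implicit Arguments. Unset Strict Implicit. Unset Printing Implicit Defensive.
Import GRing.Theory.
Local Open Scope ring_scope.

(* Rings: associative with identity (possibly the zero ring): pzRingType. *)

Definition nilpotent_el (R : pzRingType) (a : R) : Prop := exists n : nat, a ^+ n = 0.

Definition left_ideal (R : pzRingType) (I : R -> Prop) : Prop :=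
  [/\ I 0, (forall x y, I x -> I y -> I (x + y)) & (forall r x, I x -> I (r * x))].

Definition maximal_left_ideal (R : pzRingType) (M : R -> Prop) : Prop :=
  [/\ left_ideal M, ~ M 1 &
      forall K : R -> Prop, left_ideal K -> ~ K 1 -> (forall x, M x -> K x) ->
        forall x, K x -> M x].

Definition jacobson (R : pzRingType) (x : R) : Prop :=
  forall M : R -> Prop, maximal_left_ideal M -> M x.

Definition weak_symmetric (R : pzRingType) : Prop :=
  forall a b c : R, nilpotent_el (a * b * c) -> nilpotent_el (a * c * b).

Definition NJ_symmetric (R : pzRingType) : Prop :=
  forall a b c : R, nilpotent_el (a * b * c) -> jacobson (b * a * c).

(* Main.v *)
Require Import Defs.
From mathcomp Require Import all_boot all_algebra.
From Stdlib Require Import Classical.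
Import GRing.Theory.
Local Open Scope ring_scope.

Section S.
Variable R : pzRingType.
Hypothesis ws : weak_symmetric R.

Lemma rotN (u v : R) : nilpotent_el (u * v) -> nilpotent_el (v * u).
Proof.
case=> n Hn; exists n.+1.
have E : forall k, (v * u) ^+ k.+1 = v * (u * v) ^+ k * u.
  elim=> [|k IH]; first by rewrite expr1 expr0 mulr1.
  by rewrite exprS IH !mulrA exprS !mulrA.
by rewrite E Hn mulr0 mul0r.
Qed.

Lemma swapN (u v w : R) : nilpotent_el (u * v * w) -> nilpotent_el (u * w * v).
Proof. exact: ws. Qed.

Lemma key (r x : R) k (w : R) :
  nilpotent_el (r ^+ k * x ^+ k * w) -> nilpotent_el ((r * x) ^+ k * w).
Proof.
elim: k w => [|k IH] w; first by rewrite !expr0 mul1r.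
move=> H.
have H1 : nilpotent_el (r ^+ k * x ^+ k * (w * r * x)).
  move: H; rewrite exprS exprSr -!mulrA => /rotN.
  rewrite -!mulrA => H2.
  have : nilpotent_el ((r ^+ k * x ^+ k) * x * (w * r)) by rewrite -!mulrA.
  by move/swapN; rewrite -!mulrA.
move/IH: H1 => H2.
have : nilpotent_el (((r * x) ^+ k * w) * (r * x)) by rewrite -!mulrA; move: H2; rewrite -!mulrA.
by move/rotN; rewrite exprS mulrA.
Qed.

Lemma nil_pow (y : R) n : nilpotent_el (y ^+ n) -> nilpotent_el y.
Proof. by case=> m Hm; exists (n * m)%N; rewrite exprM. Qed.

Lemma leftmul (x r : R) : nilpotent_el x -> nilpotent_el (r * x).
Proof.
case=> n Hn; apply: (@nil_pow _ n).
have := @key r x n 1; rewrite !mulr1; apply.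
by exists 1%N; rewrite expr1 Hn mulr0.
Qed.

Lemma left_inv (y : R) : nilpotent_el y -> exists u, u * (1 - y) = 1.
Proof.
case=> n Hn; exists (\sum_(i < n) y ^+ i).
suff -> : forall m, (\sum_(i < m) y ^+ i) * (1 - y) = 1 - y ^+ m by rewrite Hn subr0.
elim=> [|m IH]; first by rewrite big_ord0 mul0r expr0 subrr.
rewrite big_ord_recr /= mulrDl IH mulrBr mulr1 -exprSr.
by rewrite addrA subrK.
Qed.

End S.

Theorem theorem2p11 (R : pzRingType) : weak_symmetric R -> NJ_symmetric R.
Proof.
move=> ws a b c H.
have Hx : nilpotent_el (b * a * c).
  have : nilpotent_el (b * c * a) by apply: rotN; rewrite mulrA.
  by move/ws.
move=> M [[M0 MD MM] M1 Mmax].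
set x := b * a * c in Hx *.
pose K := fun z : R => exists m r, M m /\ z = m + r * x.
have KI : left_ideal K.
  split.
  - by exists 0, 0; rewrite mul0r addr0.
  - move=> y z [m1 [r1 [h1 ->]]] [m2 [r2 [h2 ->]]].
    exists (m1 + m2), (r1 + r2); split; first exact: MD.
    by rewrite mulrDl addrACA.
  - move=> r y [m1 [r1 [h1 ->]]]; exists (r * m1), (r * r1); split; first exact: MM.
    by rewrite mulrDr mulrA.
case: (classic (K 1)) => [[m [r [hm E]]]|nK1].
  have [u Hu] := @left_inv R _ (@leftmul R ws x r Hx).
  have : M (u * (1 - r * x)) by rewrite E addrK; exact: MM.
  by rewrite Hu.
apply: (Mmax K KI nK1).
  by move=> y My; exists y, 0; rewrite mul0r addr0.
by exists 0, 1; rewrite mul1r add0r.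
Qed.
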